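(* Let $v_1\ge v_2>0$ and $b\in(0,1)$. A strategy profile $(X,Y)$ with $\mathbf{E}(X)=1$ and $\mathbf{E}(Y)=b$ is a Nash equilibrium of the discrete all-pay auction with valuations $v_1,v_2$ if and only if $v_2=2$, $b\in(0,4/v_1]$, $X=U_{\mathrm{O}}^1$ and $Y=(1-b)\delta_0+b\big(\lambda U_{\mathrm{O}}^1+(1-\lambda)U_{\mathrm{E}}^1\big)$ for some $\lambda\in[0,1]$ with $\frac{4}{bv_1}-\frac{2}{b}+1\le\lambda\le\frac{4}{bv_1}-1$. In this case $P^1(X,Y)=\frac{v_1}{2}(2-b)-1$ and $P^2(Y,X)=0$.
   Context: Discrete all-pay auction: two players, 1 and 2, value a prize at $v_1$ and $v_2$ respectively, where $v_1\ge v_2>0$. A (mixed) strategy is a probability distribution on $\mathbb{Z}_{\ge 0}$ with finite mean, identified with a $\mathbb{Z}_{\ge0}$-valued random variable; the two players' choices are independent. If player 1 uses $X$ and player 2 uses $Y$, the expected payoffs are $P^1(X,Y)=v_1\Pr(X>Y)+\frac{v_1}{2}\Pr(X=Y)-\mathbf{E}(X)$ and $P^2(Y,X)=v_2\Pr(Y>X)+\frac{v_2}{2}\Pr(X=Y)-\mathbf{E}(Y)$. A Nash equilibrium of the all-pay auction is a pair $(X,Y)$ with $P^1(X,Y)\ge P^1(X',Y)$ and $P^2(Y,X)\ge P^2(Y',X)$ for all strategies $X',Y'$. $\delta_j$ denotes the point mass at $j$; $\lambda A+(1-\lambda)B$ denotes the mixture of distributions $A$ and $B$. Special distributions: $U_{\mathrm{O}}^1=\delta_1$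 (uniform on $\{1\}$) and $U_{\mathrm{E}}^1$ is the uniform distribution on $\{0,2\}$. *)

(* Defs.v *)
From Stdlib Require Import Reals Lra List.
From Coquelicot Require Import Coquelicot.
Open Scope R_scope.

(* A mixed strategy: a probability distribution on Z_{>=0} with finite mean,
   given by its probability mass function. *)
Definition is_strategy (p : nat -> R) : Prop :=
  (forall n, 0 <= p n) /\ is_series p 1 /\ ex_series (fun n => INR n * p n).

Definition mean (p : nat -> R) : R := Series (fun n => INR n * p n).

Definition cdf_lt (q : nat -> R) (i : nat) : R :=
  fold_right Rplus 0 (map q (seq 0 i)).

(* For independent X ~ p, Y ~ q: Pr(X > Y) and Pr(X = Y). *)
Definition prob_gt (p q : nat -> R) : R := Series (fun i => p i * cdf_lt q i).
Definition prob_eq (p q : nat -> R) : R := Series (fun i => p i * q i).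

(* Payoff of a player with valuation v using p against an opponent using q:
   v Pr(X>Y) + v/2 Pr(X=Y) - E(X).  P^1(X,Y) = payoff v1 X Y,
   P^2(Y,X) = payoff v2 Y X (note Pr(Y=X) = Pr(X=Y)). *)
Definition payoff (v : R) (p q : nat -> R) : R :=
  v * prob_gt p q + v / 2 * prob_eq p q - mean p.

Definition nash_eq (v1 v2 : R) (p q : nat -> R) : Prop :=
  (forall p', is_strategy p' -> payoff v1 p' q <= payoff v1 p q) /\
  (forall q', is_strategy q' -> payoff v2 q' p <= payoff v2 q p).

Definition delta (j : nat) : nat -> R := fun n => if Nat.eqb n j then 1 else 0.

Definition U_O1 : nat -> R := delta 1.
Definition U_E1 : nat -> R :=
  fun n => if Nat.eqb n 0 then 1/2 else if Nat.eqb n 2 then 1/2 else 0.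

Definition mix (lam : R) (A B : nat -> R) : nat -> R :=
  fun n => lam * A n + (1 - lam) * B n.

(* Main.v *)
Require Import Defs.
From Stdlib Require Import Reals Lra Lia Classical FunctionalExtensionality List.
From Coquelicot Require Import Coquelicot.
Open Scope R_scope.

Definition F (v : R) (q : nat -> R) (j : nat) : R := v * (cdf_lt q j + q j / 2) - INR j.

Lemma fold_plus_acc (l : list R) (x : R) :
  fold_right Rplus x l = fold_right Rplus 0 l + x.
Proof. induction l; simpl; [ring| rewrite IHl; ring]. Qed.

Lemma cdf_S (q : nat -> R) n : cdf_lt q (S n) = cdf_lt q n + q n.
Proof.
  unfold cdf_lt. rewrite seq_S, map_app, fold_right_app. simpl.
  rewrite fold_plus_acc. ring.
Qed.

Lemma cdf_0 (q : nat -> R) : cdf_lt q 0 = 0.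
Proof. reflexivity. Qed.

Lemma cdf_sum (q : nat -> R) n : cdf_lt q (S n) = sum_f_R0 q n.
Proof.
  induction n. rewrite cdf_S, cdf_0; simpl; ring.
  rewrite cdf_S, IHn. simpl. ring.
Qed.

Lemma series_fin (a : nat -> R) (N : nat) :
  (forall n, (N < n)%nat -> a n = 0) -> is_series a (sum_f_R0 a N).
Proof.
  intros H. apply is_series_Reals. intros eps He. exists N. intros n Hn.
  assert (E : forall k, sum_f_R0 a (N + k) = sum_f_R0 a N).
  { induction k. rewrite Nat.add_0_r; auto.
    replace (N + S k)%nat with (S (N + k)) by lia. simpl. rewrite IHk, H by lia. ring. }
  replace n with (N + (n - N))%nat by lia. rewrite E. unfold R_dist.
  rewrite Rminus_diag, Rabs_R0. auto.
Qed.

Lemma partial_le (a : nat -> R) l N :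
  is_series a l -> (forall n, 0 <= a n) -> sum_f_R0 a N <= l.
Proof. intros H Hp. apply is_series_Reals in H. apply sum_incr; auto. Qed.

Lemma term_le (a : nat -> R) l k :
  is_series a l -> (forall n, 0 <= a n) -> a k <= l.
Proof.
  intros H Hp. apply Rle_trans with (sum_f_R0 a k); [|apply partial_le; auto].
  destruct k; simpl. lra. pose proof (cond_pos_sum a k Hp). lra.
Qed.

Lemma series_nonneg (a : nat -> R) l :
  is_series a l -> (forall n, 0 <= a n) -> 0 <= l.
Proof. intros H Hp. apply Rle_trans with (a 0%nat); [auto|apply term_le; auto]. Qed.

Lemma delta_series (a : nat -> R) k :
  is_series (fun j => delta k j * a j) (a k).
Proof.
  assert (E : sum_f_R0 (fun j => delta k j * a j) k = a k).
  { assert (Z : forall m, (m < k)%nat -> sum_f_R0 (fun j => delta k j * a j) m = 0).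
    { induction m; intros Hm; simpl.
      - unfold delta; destruct (Nat.eqb_spec 0 k); [lia|ring].
      - rewrite IHm by lia. unfold delta; destruct (Nat.eqb_spec (S m) k); [lia|ring]. }
    destruct k; simpl.
    - unfold delta; simpl; ring.
    - rewrite Z by lia. unfold delta. rewrite Nat.eqb_refl. ring. }
  rewrite <- E. apply series_fin. intros n Hn. unfold delta.
  destruct (Nat.eqb_spec n k); [lia|ring].
Qed.

Lemma fin3 (a : nat -> R) :
  (forall n, a (S (S (S n))) = 0) -> is_series a (a 0%nat + a 1%nat + a 2%nat).
Proof.
  intros H. replace (a 0%nat + a 1%nat + a 2%nat) with (sum_f_R0 a 2) by (simpl; ring).
  apply series_fin. intros n Hn. destruct n as [|[|[|n]]]; try lia. apply H.
Qed.

Lemma delta_strategy k : is_strategy (delta k).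
Proof.
  split; [|split].
  - intros n; unfold delta; destruct (Nat.eqb n k); lra.
  - eapply is_series_ext; [|apply (delta_series (fun _ => 1) k)]. intros n; simpl; ring.
  - exists (INR k). eapply is_series_ext; [|apply (delta_series INR k)]. intros n; simpl; ring.
Qed.

Lemma cdf_nonneg q n : (forall j, 0 <= q j) -> 0 <= cdf_lt q n.
Proof. intros H. induction n. rewrite cdf_0; lra. rewrite cdf_S. specialize (H n). lra. Qed.

Lemma cdf_le1 q n : is_strategy q -> cdf_lt q n <= 1.
Proof.
  intros [H0 [H1 H2]]. destruct n. rewrite cdf_0; lra.
  rewrite cdf_sum. apply partial_le; auto.
Qed.

Lemma cdf_ge0 q k : (forall j, 0 <= q j) -> q 0%nat <= cdf_lt q (S k).
Proof.
  intros H. induction k. rewrite cdf_S, cdf_0; lra. rewrite cdf_S. specialize (H (S k)). lra.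
Qed.

Lemma mean_series p : is_strategy p -> is_series (fun n => INR n * p n) (mean p).
Proof. intros [_ [_ H]]. apply Series_correct; auto. Qed.

Lemma ex_bound (a b : nat -> R) :
  (forall n, 0 <= a n <= b n) -> ex_series b -> ex_series a.
Proof.
  intros H E. apply (@ex_series_le R_AbsRing R_CompleteNormedModule a b); auto.
  intros n. change norm with Rabs. simpl. specialize (H n). rewrite Rabs_pos_eq; lra.
Qed.

Lemma payoff_series v p q : is_strategy p -> is_strategy q ->
  is_series (fun j => p j * F v q j) (payoff v p q).
Proof.
  intros Sp Sq. pose proof Sp as [P0 [P1 P2]]. pose proof Sq as [Q0 [Q1 Q2]].
  assert (E1 : ex_series (fun i => p i * cdf_lt q i)).
  { apply (ex_bound _ p); [|exists 1; auto]. intros n. pose proof (P0 n).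
    pose proof (cdf_le1 q n Sq). pose proof (cdf_nonneg q n Q0). nra. }
  assert (E2 : ex_series (fun i => p i * q i)).
  { apply (ex_bound _ p); [|exists 1; auto]. intros n. pose proof (P0 n).
    pose proof (term_le q 1 n Q1 Q0). pose proof (Q0 n). nra. }
  apply Series_correct in E1. apply Series_correct in E2.
  apply (is_series_scal_l v) in E1. apply (is_series_scal_l (v/2)) in E2.
  pose proof (is_series_plus _ _ _ _ E1 E2) as E3.
  pose proof (is_series_minus _ _ _ _ E3 (mean_series p Sp)) as E4.
  eapply is_series_ext; [|exact E4]. intros n. unfold F, plus, opp, scal; simpl.
  unfold mult; simpl. match goal with |- @eq _ ?a ?b => change (@eq R a b) end. field.
Qed.

Lemma payoff_delta v q k : is_strategy q -> payoff v (delta k) q = F v q k.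
Proof.
  intros Sq. pose proof (payoff_series v _ _ (delta_strategy k) Sq) as H.
  apply is_series_unique in H. rewrite <- H. apply is_series_unique, delta_series.
Qed.

Lemma br v p q : is_strategy p -> is_strategy q ->
  (forall p', is_strategy p' -> payoff v p' q <= payoff v p q) ->
  (forall k, F v q k <= payoff v p q) /\
  (forall k, 0 < p k -> F v q k = payoff v p q).
Proof.
  intros Sp Sq H. assert (Hle : forall k, F v q k <= payoff v p q).
  { intros k. rewrite <- payoff_delta with (v:=v) (k:=k) by auto. apply H, delta_strategy. }
  split; auto. intros k Hk.
  pose proof Sp as [P0 [P1 P2]].
  pose proof (is_series_scal_r (payoff v p q) _ _ P1) as A.
  pose proof (is_series_minus _ _ _ _ A (payoff_series v p q Sp Sq)) as B.
  assert (T := term_le _ _ k B).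
  unfold plus, opp in T; simpl in T.
  assert (T2 : p k * payoff v p q + - (p k * F v q k) <= 1 * payoff v p q + - payoff v p q).
  { apply T. intros n. specialize (Hle n). specialize (P0 n). nra. }
  specialize (Hle k). nra.
Qed.

Lemma le_of_bound v p' q C : is_strategy p' -> is_strategy q ->
  (forall k, F v q k <= C) -> payoff v p' q <= C.
Proof.
  intros Sp Sq H. pose proof Sp as [P0 [P1 P2]].
  pose proof (is_series_scal_r C _ _ P1) as A.
  pose proof (is_series_minus _ _ _ _ A (payoff_series v p' q Sp Sq)) as B.
  apply series_nonneg in B. unfold plus, opp in B; simpl in B. lra.
  intros n. unfold plus, opp; simpl. specialize (H n). specialize (P0 n). nra.
Qed.

Lemma selfpay v q : is_strategy q -> payoff v q q = v / 2 - mean q.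
Proof.
  intros Sq. pose proof Sq as [Q0 [Q1 Q2]].
  set (s := fun i => 2 * (q i * cdf_lt q i) + q i * q i).
  assert (Ps : forall n, sum_f_R0 s n = cdf_lt q (S n) * cdf_lt q (S n)).
  { induction n; [simpl; unfold s; rewrite cdf_S, cdf_0; ring|].
    change (sum_f_R0 s (S n)) with (sum_f_R0 s n + s (S n)). rewrite IHn. unfold s.
    rewrite (cdf_S q (S n)). ring. }
  assert (Hs : is_series s 1).
  { apply is_series_Reals. apply is_series_Reals in Q1.
    pose proof (CV_mult _ _ _ _ Q1 Q1) as C. intros eps He.
    destruct (C eps He) as [N HN]. exists N. intros n Hn. rewrite Ps, cdf_sum.
    replace 1 with (1*1) by ring. apply HN; auto. }
  assert (E1 : ex_series (fun i => q i * cdf_lt q i)).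
  { apply (ex_bound _ q); [|exists 1; auto]. intros n. pose proof (Q0 n).
    pose proof (cdf_le1 q n Sq). pose proof (cdf_nonneg q n Q0). nra. }
  assert (E2 : ex_series (fun i => q i * q i)).
  { apply (ex_bound _ q); [|exists 1; auto]. intros n. pose proof (Q0 n).
    pose proof (term_le q 1 n Q1 Q0). pose proof (Q0 n). nra. }
  apply Series_correct in E1. apply Series_correct in E2.
  apply (is_series_scal_l 2) in E1.
  pose proof (is_series_plus _ _ _ _ E1 E2) as E3.
  assert (U : 2 * prob_gt q q + prob_eq q q = 1).
  { apply is_series_unique in E3. apply is_series_unique in Hs.
    unfold s in Hs. unfold plus, scal in E3; simpl in E3. unfold mult in E3; simpl in E3.
    unfold prob_gt, prob_eq. rewrite <- Hs, <- E3. reflexivity. }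
  unfold payoff. nra.
Qed.

Lemma INR_SS k : 2 <= INR (S (S k)).
Proof. rewrite !S_INR. pose proof (pos_INR k). lra. Qed.

Lemma INR_SSS k : 3 <= INR (S (S (S k))).
Proof. rewrite !S_INR. pose proof (pos_INR k). lra. Qed.

Lemma pos_of (x : R) : 0 <= x -> x <> 0 -> 0 < x.
Proof. intros. lra. Qed.

Lemma cdf_O1 k : cdf_lt U_O1 (S (S k)) = 1.
Proof.
  induction k. unfold cdf_lt, U_O1, delta; simpl; ring.
  rewrite cdf_S, IHk. unfold U_O1, delta; simpl. ring.
Qed.

Lemma cdf3 (q : nat -> R) : (forall n, q (S (S (S n))) = 0) ->
  forall k, cdf_lt q (S (S (S k))) = q 0%nat + q 1%nat + q 2%nat.
Proof.
  intros H k. induction k. unfold cdf_lt; simpl; ring.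
  rewrite cdf_S, IHk, H. ring.
Qed.

Lemma forward (v1 v2 b : R) (p q : nat -> R) :
  v1 >= v2 -> v2 > 0 -> 0 < b < 1 ->
  is_strategy p -> is_strategy q -> mean p = 1 -> mean q = b ->
  nash_eq v1 v2 p q ->
  v2 = 2 /\ v1 * b <= 4 /\ p = U_O1 /\
  0 <= q 1%nat <= b /\ 4 - 2 * v1 + b * v1 <= q 1%nat * v1 /\ q 1%nat * v1 <= 4 - b * v1 /\
  q 0%nat = 1 - b / 2 - q 1%nat / 2 /\ q 2%nat = (b - q 1%nat) / 2 /\
  (forall n, q (S (S (S n))) = 0) /\
  payoff v1 p q = v1 / 2 * (2 - b) - 1 /\ payoff v2 q p = 0.
Proof.
  intros Hv Hv2 Hb Sp Sq Mp Mq [N1 N2].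
  assert (Hv1 : v1 > 0) by lra.
  destruct (br _ _ _ Sp Sq N1) as [Fle1 Feq1].
  destruct (br _ _ _ Sq Sp N2) as [Fle2 Feq2].
  pose proof Sp as [P0 [P1 P2]]. pose proof Sq as [Q0 [Q1 Q2]].
  pose proof (mean_series p Sp) as Hmp. rewrite Mp in Hmp.
  pose proof (mean_series q Sq) as Hmq. rewrite Mq in Hmq.
  pose proof (is_series_minus _ _ _ _ Hmp P1) as Cp.
  pose proof (is_series_minus _ _ _ _ Hmq Q1) as Cq.
  unfold plus, opp in Cp, Cq; simpl in Cp, Cq.
  assert (Hk2 : forall k, p (S (S k)) = 0).
  { intros k. destruct (Req_dec (p (S (S k))) 0) as [|Hne]; auto. exfalso.
    assert (Hpk : 0 < p (S (S k))) by (apply pos_of; auto).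
    assert (Hp0 : 0 < p 0%nat).
    { apply pos_of; auto. intros E.
      assert (T := term_le _ _ (S (S k)) Cp). simpl in T.
      assert (T2 : INR (S (S k)) * p (S (S k)) + - p (S (S k)) <= 1 + - 1).
      { apply T. intros [|j]. simpl. rewrite E. lra.
        rewrite S_INR. pose proof (pos_INR j). pose proof (P0 (S j)). nra. }
      pose proof (INR_SS k). nra. }
    pose proof (Feq1 _ Hp0) as E0. pose proof (Feq1 _ Hpk) as Ek.
    pose proof (Fle1 (S k)) as Lk.
    pose proof (N1 q Sq) as Hself. rewrite selfpay, Mq in Hself by auto.
    unfold F in E0, Ek, Lk. rewrite cdf_0 in E0. rewrite cdf_S in Ek.
    rewrite (S_INR (S k)) in Ek. simpl INR in E0.
    pose proof (cdf_le1 q (S (S (S k))) Sq) as C1. rewrite !cdf_S in C1.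
    pose proof (cdf_ge0 q k Q0) as C2. rewrite cdf_S in C2.
    assert (v1 * (q (S k) + q (S (S k))) <= v1 * (1 - q 0%nat)).
    { apply Rmult_le_compat_l; lra. }
    lra. }
  assert (Hp0 : p 0%nat = 0).
  { assert (D := delta_series (fun _ => - p 0%nat) 0).
    apply is_series_unique in D. apply is_series_unique in Cp.
    rewrite (Series_ext _ (fun j => delta 0 j * - p 0%nat)) in Cp. lra.
    intros [|[|j]]; unfold delta; simpl. ring. ring. rewrite Hk2. ring. }
  assert (Hp1 : p 1%nat = 1).
  { assert (D := delta_series (fun _ => p 1%nat) 1).
    apply is_series_unique in D. apply is_series_unique in P1.
    rewrite (Series_ext _ (fun j => delta 1 j * p 1%nat)) in P1. lra.
    intros [|[|j]]; unfold delta; simpl. rewrite Hp0; ring. ring. rewrite Hk2. ring. }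
  assert (Hp : p = U_O1).
  { apply functional_extensionality. intros [|[|j]]; unfold U_O1, delta; simpl; auto. }
  subst p.
  assert (FO0 : F v2 U_O1 0 = 0) by (unfold F, U_O1, delta, cdf_lt; simpl; field).
  assert (FO1 : F v2 U_O1 1 = v2 / 2 - 1) by (unfold F, U_O1, delta, cdf_lt; simpl; field).
  assert (FO2 : forall k, F v2 U_O1 (S (S k)) = v2 - INR (S (S k))).
  { intros k. unfold F. rewrite cdf_O1. unfold U_O1, delta; simpl. field. }
  assert (Hq0 : 0 < q 0%nat).
  { apply pos_of; auto. intros E. apply series_nonneg in Cq. lra.
    intros [|j]. simpl. rewrite E. lra.
    rewrite S_INR. pose proof (pos_INR j). pose proof (Q0 (S j)). nra. }
  pose proof (Feq2 _ Hq0) as M2. rewrite FO0 in M2.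
  assert (Hv22 : v2 = 2).
  { destruct (classic (exists j, (1 <= j)%nat /\ 0 < q j)) as [[j [Hj Hqj]]|Hn].
    - pose proof (Feq2 _ Hqj) as E. pose proof (Fle2 2%nat) as L2. rewrite FO2 in L2.
      simpl INR in L2. destruct j as [|[|j]]; try lia.
      + rewrite FO1 in E. lra.
      + rewrite FO2 in E. pose proof (INR_SS j). lra.
    - exfalso. assert (Z : forall j, INR j * q j = delta 0 j * 0).
      { intros [|j]. simpl; ring. destruct (Req_dec (q (S j)) 0) as [E|E].
        rewrite E; unfold delta; simpl; ring.
        exfalso. apply Hn. exists (S j). split. lia. apply pos_of; auto. }
      apply is_series_unique in Hmq. rewrite (Series_ext _ _ Z) in Hmq.
      rewrite (is_series_unique _ _ (delta_series (fun _ => 0) 0)) in Hmq. lra. }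
  subst v2.
  assert (Hq3 : forall n, q (S (S (S n))) = 0).
  { intros n. destruct (Req_dec (q (S (S (S n)))) 0) as [|E]; auto. exfalso.
    pose proof (Feq2 _ (pos_of _ (Q0 _) E)) as E2. rewrite FO2 in E2.
    pose proof (INR_SSS n). lra. }
  assert (S1 := fin3 _ Hq3). apply is_series_unique in S1.
  rewrite (is_series_unique _ _ Q1) in S1.
  assert (S2 : is_series (fun n => INR n * q n) (INR 0 * q 0%nat + INR 1 * q 1%nat + INR 2 * q 2%nat)).
  { apply (fin3 (fun n => INR n * q n)). intros n. simpl. rewrite Hq3. ring. }
  apply is_series_unique in S2. rewrite (is_series_unique _ _ Hmq) in S2. simpl in S2.
  assert (Hp1' : 0 < U_O1 1) by (unfold U_O1, delta; simpl; lra).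
  pose proof (Feq1 _ Hp1') as M1.
  pose proof (Fle1 0%nat) as L0. pose proof (Fle1 2%nat) as L2. pose proof (Fle1 3%nat) as L3.
  rewrite <- M1 in L0, L2, L3.
  unfold F in M1, L0, L2, L3. pose proof (cdf3 q Hq3 0) as C3. change (S (S (S 0))) with 3%nat in C3. rewrite C3 in L3. change 3%nat with (S (S (S 0))) in L3. rewrite Hq3 in L3.
  idtac.
  unfold cdf_lt in M1, L0, L2, L3; simpl in M1, L0, L2, L3.
  pose proof (Q0 2%nat) as Q02.
  assert (A1 : v1 * q 0%nat + v1 * q 1%nat + v1 * q 2%nat = v1 * 1) by (rewrite S1; ring).
  assert (A2 : v1 * q 1%nat + 2 * (v1 * q 2%nat) = v1 * b) by (rewrite S2; simpl; ring).
  repeat split; try lra; auto.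
Qed.

Lemma to_div (a c x : R) : 0 < x -> a * x <= c -> a <= c / x.
Proof.
  intros Hx H. apply Rmult_le_reg_r with x; auto.
  replace (c / x * x) with c by (field; lra). auto.
Qed.

Lemma from_div (a c x : R) : 0 < x -> a <= c / x -> a * x <= c.
Proof.
  intros Hx H. replace c with (c / x * x) by (field; lra).
  apply Rmult_le_compat_r; lra.
Qed.

Lemma converse (v1 v2 b : R) (p q : nat -> R) (lam : R) :
  v1 >= v2 -> v2 > 0 -> 0 < b < 1 ->
  is_strategy p -> is_strategy q ->
  v2 = 2 -> b <= 4 / v1 -> p = U_O1 -> 0 <= lam <= 1 ->
  4 / (b * v1) - 2 / b + 1 <= lam -> lam <= 4 / (b * v1) - 1 ->
  q = mix (1 - b) (delta 0) (mix lam U_O1 U_E1) ->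
  nash_eq v1 v2 p q.
Proof.
  intros Hv Hv2 Hb Sp Sq E2 Hb4 Ep Hl Hl1 Hl2 Eq.
  assert (Hv1 : v1 > 0) by lra.
  assert (Hbv : 0 < b * v1) by nra.
  apply from_div in Hb4; [|lra].
  assert (B1 : 4 - 2 * v1 + b * v1 <= lam * (b * v1)).
  { apply (Rmult_le_compat_r (b * v1)) in Hl1; [|lra].
    replace ((4 / (b * v1) - 2 / b + 1) * (b * v1)) with (4 - 2 * v1 + b * v1) in Hl1
      by (field; lra). auto. }
  assert (B2 : lam * (b * v1) <= 4 - b * v1).
  { replace (4 - b * v1) with ((4 / (b * v1) - 1) * (b * v1)) by (field; lra).
    apply Rmult_le_compat_r; lra. }
  subst v2 p.
  assert (Hq0 : q 0%nat = (1 - b) + b * (1 - lam) / 2)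
    by (rewrite Eq; unfold mix, U_O1, U_E1, delta; simpl; field).
  assert (Hq1 : q 1%nat = b * lam)
    by (rewrite Eq; unfold mix, U_O1, U_E1, delta; simpl; field).
  assert (Hq2 : q 2%nat = b * (1 - lam) / 2)
    by (rewrite Eq; unfold mix, U_O1, U_E1, delta; simpl; field).
  assert (Hq3 : forall n, q (S (S (S n))) = 0)
    by (intros n; rewrite Eq; unfold mix, U_O1, U_E1, delta; simpl; ring).
  clear Eq. split.
  - intros p' Sp'. unfold U_O1. rewrite payoff_delta by auto.
    apply le_of_bound; auto. intros [|[|[|k]]]; unfold F.
    + unfold cdf_lt; simpl. rewrite Hq0, Hq1. nra.
    + lra.
    + unfold cdf_lt; simpl. rewrite Hq0, Hq1, Hq2. nra.
    + rewrite cdf3, Hq3 by auto. assert (HK := INR_SSS k). revert HK.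
      generalize (INR (S (S (S k)))). intros K HK.
      unfold cdf_lt; simpl. rewrite Hq0, Hq1, Hq2. nra.
  - intros q' Sq'.
    assert (FO : forall k, F 2 U_O1 k <= 0).
    { intros [|[|k]]; unfold F.
      - unfold cdf_lt, U_O1, delta; simpl. lra.
      - unfold cdf_lt, U_O1, delta; simpl. lra.
      - rewrite cdf_O1. assert (HK := INR_SS k). revert HK.
        generalize (INR (S (S k))). intros K HK. unfold U_O1, delta; simpl. lra. }
    assert (Z : payoff 2 q U_O1 = 0).
    { pose proof (payoff_series 2 _ _ Sq (delta_strategy 1)) as H.
      fold U_O1 in H. apply is_series_unique in H. rewrite <- H.
      rewrite (Series_ext _ (fun j => delta 0 j * 0)).
      apply is_series_unique, (delta_series (fun _ => 0)).
      intros [|[|[|k]]]; unfold F, cdf_lt, U_O1, delta; simpl; try field.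
      rewrite Hq3. ring. }
    rewrite Z. apply le_of_bound; auto using delta_strategy.
Qed.

Theorem proposition4 (v1 v2 b : R) (p q : nat -> R) :
  v1 >= v2 -> v2 > 0 -> 0 < b < 1 ->
  is_strategy p -> is_strategy q -> mean p = 1 -> mean q = b ->
  (nash_eq v1 v2 p q <->
     (v2 = 2 /\ 0 < b <= 4 / v1 /\ p = U_O1 /\
      exists lam : R, 0 <= lam <= 1 /\
        4 / (b * v1) - 2 / b + 1 <= lam <= 4 / (b * v1) - 1 /\
        q = mix (1 - b) (delta 0) (mix lam U_O1 U_E1))) /\
  (nash_eq v1 v2 p q ->
     payoff v1 p q = v1 / 2 * (2 - b) - 1 /\ payoff v2 q p = 0).
Proof.
  intros Hv Hv2 Hb Sp Sq Mp Mq. split; [split|].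
  - intros NE.
    destruct (forward v1 v2 b p q Hv Hv2 Hb Sp Sq Mp Mq NE)
      as [E2 [B4 [Ep [Q1 [L1 [L2 [E0 [Eq2 [Hq3 _]]]]]]]]].
    assert (Hv1 : v1 > 0) by lra.
    assert (Hbv : 0 < b * v1) by nra.
    split; auto. split; [split; [lra|apply to_div; lra]|]. split; auto.
    exists (q 1%nat / b). split; [split|split; [split|]].
    + apply Rmult_le_pos; [lra|]. left; apply Rinv_0_lt_compat; lra.
    + apply Rmult_le_reg_r with b; [lra|].
      replace (q 1%nat / b * b) with (q 1%nat) by (field; lra). lra.
    + replace (4 / (b * v1) - 2 / b + 1) with ((4 - 2 * v1 + b * v1) / (b * v1)) by (field; lra).
      replace (q 1%nat / b) with ((q 1%nat * v1) / (b * v1)) by (field; lra).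
      unfold Rdiv. apply Rmult_le_compat_r; [left; apply Rinv_0_lt_compat; lra|lra].
    + replace (4 / (b * v1) - 1) with ((4 - b * v1) / (b * v1)) by (field; lra).
      replace (q 1%nat / b) with ((q 1%nat * v1) / (b * v1)) by (field; lra).
      unfold Rdiv. apply Rmult_le_compat_r; [left; apply Rinv_0_lt_compat; lra|lra].
    + apply functional_extensionality. intros [|[|[|n]]];
        unfold mix, U_O1, U_E1, delta; simpl.
      * rewrite E0. field. lra.
      * field. lra.
      * rewrite Eq2. field. lra.
      * rewrite Hq3. ring.
  - intros [E2 [[_ B4] [Ep [lam [Hl [[Hl1 Hl2] Eq]]]]]].
    eapply converse; eauto.
  - intros NE. destruct (forward v1 v2 b p q Hv Hv2 Hb Sp Sq Mp Mq NE)
      as [_ [_ [_ [_ [_ [_ [_ [_ [_ [P1 P2]]]]]]]]]]. auto.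
Qed.
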